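(* For all $\alpha,\varepsilon>0$ and $k\in\mathbb{N}$, there exist $\eta>0$ and $N\in\mathbb{N}$ such that for all $n>N$ the following holds. Suppose $f\colon[n]\to[0,1]$ is such that every interval $J\subseteq[n]$ of length at least $\lfloor\eta n\rfloor$ satisfies \[ \Big|\frac{1}{|J|}\sum_{t\in J}f(t)-\alpha\Big|\le\eta. \] Then for all $x,y\in[k]$, \[ \sum_{t=\lceil\eta n\rceil}^{\lfloor(1-\eta)n\rfloor}f(t)\binom{t-1}{x}\binom{n-t}{y}\ge(1-\varepsilon)\alpha\binom{n}{x+y+1}. \]
   Context: An interval $J\subseteq[n]$ is a set of consecutive integers; its length is $|J|$. *)

(* Defs.v *)
From HB Require Import structures.
From mathcomp Require Import all_boot all_order all_algebra.
From mathcomp Require Import all_classical all_reals.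
Set Implicit Arguments. Unset Strict Implicit. Unset Printing Implicit Defensive.
Import Order.TTheory GRing.Theory Num.Theory.

(* Main.v *)
Require Import Defs.
From HB Require Import structures.
From mathcomp Require Import all_boot all_order all_algebra.
From mathcomp Require Import all_classical all_reals.
From mathcomp Require Import zify ring lra.
Import Order.TTheory GRing.Theory Num.Theory.
Local Open Scope ring_scope.
Section Aux.
Variable R : realType.

Lemma sum_interval (h : nat -> R) (n lo hi : nat) : (hi <= n)%N ->
  \sum_(0 <= t < n | (lo <= t < hi)%N) h t = \sum_(lo <= t < hi) h t.
Proof.
move=> hn; symmetry.
rewrite (big_nat_widen _ _ _ _ _ hn) (@big_nat_widenl _ _ _ lo 0) //.
by apply: eq_bigl => t; rewrite andbC.
Qed.

Lemma hockey (z s : nat) :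
  \sum_(0 <= j < s) ('C(j, z))%:R = ('C(s, z.+1))%:R :> R.
Proof.
elim: s => [|s IH]; first by rewrite big_geq.
by rewrite big_nat_recr //= IH binS natrD.
Qed.

Lemma H1 (n t z : nat) : (t <= n.+1)%N ->
  \sum_(0 <= a < n.+1 | (0 < a)%N && (a < t)%N) ('C(a.-1, z))%:R = ('C(t.-1, z.+1))%:R :> R.
Proof.
move=> ht; rewrite (@sum_interval (fun a => ('C(a.-1, z))%:R) n.+1 1 t ht).
rewrite big_add1 /=; exact: hockey.
Qed.

Lemma H2 (n t z : nat) : (t <= n)%N ->
  \sum_(0 <= b < n.+1 | (t < b)%N) ('C(n - b, z))%:R = ('C(n - t, z.+1))%:R :> R.
Proof.
move=> ht.
rewrite big_nat_cond (eq_bigl (fun b => (t.+1 <= b < n.+1)%N)); last first.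
  by move=> b; apply/idP/idP => H; lia.
rewrite (@sum_interval (fun b => ('C(n - b, z))%:R) n.+1 t.+1 n.+1 (leqnn _)).
rewrite big_nat_rev /=.
rewrite (eq_big_nat _ _ (F2 := fun b => ('C(b - t.+1, z))%:R)); last first.
  move=> i hi; congr (_%:R); congr 'C(_, _); lia.
rewrite -{1}(add0n t.+1) big_addn.
rewrite (eq_big_nat _ _ (F2 := fun b => ('C(b, z))%:R)); last first.
  move=> i hi; congr (_%:R); congr 'C(_, _); lia.
rewrite hockey; congr (_%:R); congr 'C(_, _); lia.
Qed.

Lemma V (x y n : nat) :
  \sum_(0 <= t < n) ('C(t, x) * 'C(n - t.+1, y))%:R = ('C(n, x + y + 1))%:R :> R.
Proof.
elim: y n => [|y IHy] n.
  rewrite (eq_big_nat _ _ (F2 := fun t => ('C(t, x))%:R)); last first.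
    by move=> i _; rewrite bin0 muln1.
  by rewrite hockey addn0 addn1.
elim: n => [|n IHn]; first by rewrite big_geq // addn1.
rewrite big_nat_recr //= subnn bin0n /= muln0 addr0.
rewrite (eq_big_nat _ _ (F2 := fun t => ('C(t, x) * 'C(n - t.+1, y.+1))%:R +
                                       ('C(t, x) * 'C(n - t.+1, y))%:R)); last first.
  move=> i hi; rewrite -natrD -mulnDr -binS; congr (_ * 'C(_, _))%:R; lia.
rewrite big_split /= IHn IHy -natrD.
have -> : (x + y.+1 + 1 = (x + y + 1).+1)%N by lia.
by rewrite binS.
Qed.


Lemma exch (n x y : nat) (g : nat -> R) (P : pred nat) : (0 < x)%N -> (0 < y)%N ->
  \sum_(0 <= t < n.+1 | P t) g t * ('C(t.-1, x))%:R * ('C(n - t, y))%:R =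
  \sum_(0 <= a < n.+1) \sum_(0 <= b < n.+1)
     (('C(a.-1, x.-1))%:R * ('C(n - b, y.-1))%:R) *
     \sum_(0 <= t < n.+1 | P t && ((0 < a)%N && (a < t)%N) && (t < b)%N) g t.
Proof.
case: x => // x _; case: y => // y _ /=.
have E : forall t, (0 <= t < n.+1)%N ->
  (if P t then g t * ('C(t.-1, x.+1))%:R * ('C(n - t, y.+1))%:R else 0) =
  \sum_(0 <= a < n.+1) \sum_(0 <= b < n.+1)
    (if P t && ((0 < a)%N && (a < t)%N) && (t < b)%N then
       (('C(a.-1, x))%:R * ('C(n - b, y))%:R) * g t else 0).
  move=> t /andP[_ ht].
  case: (P t) => /=; last by rewrite big1 // => a _; rewrite big1.
  rewrite -(@H1 n t x) ?(ltnW ht) // -(@H2 n t y) //.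
  rewrite -mulrA big_distrlr mulr_sumr big_mkcond /=; apply: eq_bigr => a _.
  rewrite mulr_sumr big_mkcond /=.
  case: ((0 < a)%N && (a < t)%N) => /=; last by rewrite big1 // => b _; case: (t < b)%N.
  apply: eq_bigr => b _; case: (t < b)%N => /=; last by [].
  ring.
rewrite big_mkcond (eq_big_nat _ _ E) exchange_big_nat.
apply: eq_big_nat => a ha; rewrite exchange_big_nat /=.
apply: (@eq_big_nat R 0 GRing.add) => b hb; rewrite mulr_sumr big_mkcond /=.
by rewrite [RHS]big_mkcond.
Qed.

End Aux.

Lemma final_arith (R : realType) (alpha eps e eta K n m Cm Cq : R) :
 0 < alpha -> 0 < e -> e <= 1/2 -> e <= eps -> 0 < eta -> 18 * K * eta <= e ->
 18 * eta <= e * alpha -> 12 * K <= e * n -> 0 < n -> 0 <= m -> m + 1 <= K ->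
 2 * m <= n -> 0 <= Cm -> 0 <= Cq -> (m + 1) * Cm = (n - m) * Cq ->
 (1 - eps) * alpha * Cm <= (alpha - eta) * (Cm - (3 * eta * n + 2) * Cq).
Proof.
move=> ha e0 e1 e2 eta0 F1 F2 hn2 npos m0 mK m2 Cm0 Cq0 Hrel.
have p1 : 0 <= (n - 2 * m) * Cq by apply: mulr_ge0 => //; lra.
have p2 : 0 <= (K - (m + 1)) * Cm by apply: mulr_ge0 => //; lra.
have hnq : n * Cq <= 2 * K * Cm by nra.
have p3 : 0 <= (e - 18 * K * eta) * (n * Cm).
  by apply: mulr_ge0; [lra | apply: mulr_ge0 => //; lra].
have p4 : 0 <= (e * n - 12 * K) * Cm by apply: mulr_ge0 => //; lra.
have p5 : 0 <= (9 * eta * n) * (2 * K * Cm - n * Cq).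
  apply: mulr_ge0; last lra. apply: mulr_ge0; last lra. lra.
set D := (3 * eta * n + 2) * Cq.
have hEq : n * (3 * D) <= n * (2 * e * Cm) by rewrite /D; nra.
have hE : 3 * D <= 2 * e * Cm by rewrite -(ler_pM2l npos).
have ea0 : 0 <= e * alpha by apply: mulr_ge0; lra.
have hae : alpha * (3 - e) <= 3 * (alpha - eta) by lra.
have hea2 : 2 * e * alpha <= alpha by nra.
have aeta : 0 <= alpha - eta by lra.
have q1 : 0 <= (alpha - eta) * (3 * (Cm - D) - (3 - 2 * e) * Cm).
  apply: mulr_ge0 => //; rewrite /D in hE *; lra.
have q2 : 0 <= (3 * (alpha - eta) - alpha * (3 - e)) * ((3 - 2 * e) * Cm).
  apply: mulr_ge0; first lra. apply: mulr_ge0 => //; lra.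
have q3 : 0 <= alpha * Cm * (e * e).
  by apply: mulr_ge0; [apply: mulr_ge0 => //; lra | apply: mulr_ge0; lra].
have q4 : 0 <= alpha * Cm * (eps - e) by apply: mulr_ge0; [apply: mulr_ge0 => //; lra | lra].
nra.
Qed.

Theorem lemma3p5 (R : realType) (alpha eps : R) (k : nat) :
  0 < alpha -> 0 < eps ->
  exists eta : R, 0 < eta /\ exists N : nat, forall n : nat, (N < n)%N ->
  forall f : nat -> R,
    (forall t : nat, (1 <= t <= n)%N -> 0 <= f t <= 1) ->
    (* every interval J = {a, ..., a+L-1} of [n] = {1..n}, |J| = L >= floor(eta n) *)
    (forall a L : nat, (1 <= a)%N -> (1 <= L)%N -> (a + L <= n.+1)%N ->
       Num.floor (eta * n%:R) <= L%:Z ->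
       `| L%:R^-1 * (\sum_(a <= t < a + L) f t) - alpha | <= eta) ->
    forall x y : nat, (1 <= x <= k)%N -> (1 <= y <= k)%N ->
      (1 - eps) * alpha * ('C(n, x + y + 1))%:R <=
      \sum_(t < n.+1 | (Num.ceil (eta * n%:R) <= (t : nat)%:Z) &&
                       ((t : nat)%:Z <= Num.floor ((1 - eta) * n%:R)))
         f t * ('C(t.-1, x))%:R * ('C(n - t, y))%:R.
Proof.
move=> ha he.
pose e := Num.min eps (1/2).
have e0 : 0 < e by rewrite lt_min he /=; lra.
have e1 : e <= 1/2 by rewrite ge_min lexx orbT.
have e2 : e <= eps by rewrite ge_min lexx.
pose Kn := (2 * k).+1.
have K1 : 1 <= Kn%:R :> R by rewrite ler1n.
pose eta := e * alpha / (18 * Kn%:R * (1 + alpha)).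
have D0 : 0 < 18 * Kn%:R * (1 + alpha) :> R.
  apply: mulr_gt0; last lra. apply: mulr_gt0; lra.
have eta0 : 0 < eta by rewrite /eta; apply: divr_gt0 => //; apply: mulr_gt0.
have etaK : 18 * Kn%:R * (1 + alpha) * eta = e * alpha.
  by rewrite /eta mulrC divfK // gt_eqF.
exists eta; split => //.
exists (4 * k + `|Num.ceil (12 * Kn%:R / e)|)%N.
move=> n hn f hf hI x y /andP[x1 xk] /andP[y1 yk].
have F1 : 18 * Kn%:R * eta <= e by nra.
have F2 : 18 * eta <= e * alpha by nra.
have eta1 : eta <= 1/2 by nra.
clearbody eta.
have hn1 : (4 * k < n)%N by clear -hn; lia.
have hn2 : 12 * Kn%:R <= e * n%:R.
  have h1 := ceil_ge (12 * Kn%:R / e).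
  have h2 : 0 <= Num.ceil (12 * Kn%:R / e).
    rewrite ceil_ge0; apply: (@lt_le_trans _ _ 0); first lra.
    apply: divr_ge0 => //; lra.
  have h3 : (`|Num.ceil (12 * Kn%:R / e)| <= n)%N by clear -hn; lia.
  have h4 : (Num.ceil (12 * Kn%:R / e))%:~R <= n%:R :> R.
    rewrite -(gez0_abs h2) -pmulrn ler_nat //.
  have h5 : 12 * Kn%:R / e <= n%:R := le_trans h1 h4.
  have := ler_wpM2l (ltW e0) h5.
  by rewrite mulrCA divff ?gt_eqF // mulr1.
have [c hc] : exists c : nat, Num.ceil (eta * n%:R) = c%:Z.
  exists `|Num.ceil (eta * n%:R)|%N; rewrite gez0_abs // ceil_ge0.
  apply: (@lt_le_trans _ _ 0); first lra. by apply: mulr_ge0; [lra | rewrite ler0n].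
have hc1 : eta * n%:R <= c%:R.
  by have := ceil_ge (eta * n%:R); rewrite hc -pmulrn.
have hc2 : c%:R < eta * n%:R + 1.
  by have := ceilB1_lt (eta * n%:R); rewrite hc intrB -!pmulrn; move=> h; lra.
have [F hF] : exists F : nat, Num.floor ((1 - eta) * n%:R) = F%:Z.
  exists `|Num.floor ((1 - eta) * n%:R)|%N; rewrite gez0_abs // floor_ge0.
  by apply: mulr_ge0; [lra | rewrite ler0n].
have hF1 : F%:R <= (1 - eta) * n%:R.
  by have := floor_le ((1 - eta) * n%:R); rewrite hF -pmulrn.
have hF2 : (1 - eta) * n%:R < F%:R + 1.
  by have := floorD1_gt ((1 - eta) * n%:R); rewrite hF rmorphD /= -!pmulrn ?mulr1n.
have hFn : (F <= n)%N.
  rewrite -(ler_nat R); apply: (le_trans hF1).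
  have : 0 <= n%:R :> R by []. nra.
have -> : \sum_(t < n.+1 | (Num.ceil (eta * n%:R) <= (t : nat)%:Z) &&
                       ((t : nat)%:Z <= Num.floor ((1 - eta) * n%:R)))
         f t * ('C(t.-1, x))%:R * ('C(n - t, y))%:R =
   \sum_(0 <= t < n.+1 | (Num.ceil (eta * n%:R) <= t%:Z) &&
                       (t%:Z <= Num.floor ((1 - eta) * n%:R)))
         f t * ('C(t.-1, x))%:R * ('C(n - t, y))%:R by rewrite big_mkord.
rewrite (eq_bigl (fun t => (c <= t)%N && (t <= F)%N)); last first.
  by move=> t; rewrite hc hF !lez_nat.
case: x x1 xk => // x _ xk; case: y y1 yk => // y _ yk.
have npos : 0 < n%:R :> R by rewrite ltr0n; clear -hn1; lia.
have etan : 0 < eta * n%:R by apply: mulr_gt0.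
have hea : e * alpha <= 1/2 * alpha := ler_wpM2r (ltW ha) e1.
have hae : 0 <= alpha - eta by lra.
have W : ('C(n, x.+1 + y.+1 + 1))%:R =
  \sum_(0 <= a < n.+1) \sum_(0 <= b < n.+1)
     (('C(a.-1, x))%:R * ('C(n - b, y))%:R) *
     \sum_(0 <= t < n.+1 | (0 < t)%N && ((0 < a)%N && (a < t)%N) && (t < b)%N) (1 : R).
  rewrite -(@exch R n x.+1 y.+1 (fun _ => 1) (fun t => (0 < t)%N)) //.
  rewrite big_ltn_cond // /= big_add1 /= -V.
  by apply: eq_big_nat => t _; rewrite mul1r natrM.
have Q : ('C(n, x + y.+1 + 1))%:R =
  \sum_(0 <= a < n.+1) \sum_(0 <= b < n.+1)
     (('C(a.-1, x))%:R * ('C(n - b, y))%:R) *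
     (if (0 < a)%N && (a < b)%N then 1 else 0 : R).
  rewrite -V [RHS]big_ltn // [X in _ = X + _]big1 ?add0r; last by move=> b _; rewrite /= mulr0.
  rewrite [RHS]big_add1 /=; apply: eq_big_nat => a hai.
  transitivity (('C(a, x))%:R * \sum_(0 <= b < n.+1 | (a.+1 < b)%N) ('C(n - b, y))%:R : R).
    by rewrite H2 ?natrM //; clear -hai; lia.
  rewrite mulr_sumr big_mkcond; apply: eq_bigr => b _ /=.
  by case: (a.+1 < b)%N => /=; ring.
have Hpair : forall a b, (a < n.+1)%N -> (b < n.+1)%N ->
  (alpha - eta) *
   (\sum_(0 <= t < n.+1 | (0 < t)%N && ((0 < a)%N && (a < t)%N) && (t < b)%N) (1 : R)
     - (3 * eta * n%:R + 2) * (if (0 < a)%N && (a < b)%N then 1 else 0))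
  <= \sum_(0 <= t < n.+1 | (c <= t <= F)%N && ((0 < a)%N && (a < t)%N) && (t < b)%N) f t.
  move=> a b hA hb.
  case: (boolP ((0 < a)%N && (a < b)%N)) => hab; last first.
    rewrite !big_pred0 ?subrr ?mulr0 ?mulr0 ?subrr ?mulr0 //.
      by move=> t; apply/negbTE/negP => H; move/negP: hab; clear -H; lia.
    by move=> t; apply/negbTE/negP => H; move/negP: hab; clear -H; lia.
  case/andP: (hab) => a0 ab; rewrite mulr1.
  have Hl : \sum_(0 <= t < n.+1 | (0 < t)%N && ((0 < a)%N && (a < t)%N) && (t < b)%N) (1 : R)
      = (b - a.+1)%:R.
    rewrite (eq_bigl (fun t => (a.+1 <= t < b)%N)); last first.
      by move=> t; apply/idP/idP => H; clear -H a0; lia.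
    rewrite (@sum_interval _ (fun _ => 1) n.+1 a.+1 b) ?(ltnW hb) //.
    by rewrite sumr_const_nat.
  have HG : \sum_(0 <= t < n.+1 | (c <= t <= F)%N && ((0 < a)%N && (a < t)%N) && (t < b)%N) f t
      = \sum_(maxn a.+1 c <= t < minn b F.+1) f t.
    rewrite (eq_bigl (fun t => (maxn a.+1 c <= t < minn b F.+1)%N)); last first.
      by move=> t; apply/idP/idP => H; clear -H a0; lia.
    by rewrite sum_interval //; clear -hb hFn; lia.
  rewrite Hl HG.
  have hL : ((b - a.+1) <= (minn b F.+1 - maxn a.+1 c) + c + (n - F))%N.
    by clear -hFn ab hb; lia.
  move: hL; rewrite -(ler_nat R) !natrD (@natrB R n F hFn) => hL.
  have Hlt : (b - a.+1)%:R - (3 * eta * n%:R + 2) <=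
             (minn b F.+1 - maxn a.+1 c)%:R - eta * n%:R :> R.
    clear -hL hc2 hF2; move: hF2; rewrite mulrBl mul1r => hF2; lra.
  have Hsum0 : 0 <= \sum_(maxn a.+1 c <= t < minn b F.+1) f t.
    rewrite big_nat_cond; apply: sumr_ge0 => t /andP[/andP[h1 h2] _].
    by case/andP: (hf t (ltac:(clear -h1 h2 hb; lia))).
  case: (boolP ((0 < minn b F.+1 - maxn a.+1 c)%N &&
     (Num.floor (eta * n%:R) <= (minn b F.+1 - maxn a.+1 c)%:Z))) => hLL.
    case/andP: hLL => L0 Lf.
    have := hI (maxn a.+1 c) (minn b F.+1 - maxn a.+1 c)%N
      ltac:(clear; lia) L0 ltac:(clear -L0 hb hFn; lia) Lf.
    rewrite subnKC; last by clear -L0; lia.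
    rewrite ler_distl => /andP[h _].
    set L := (minn b F.+1 - maxn a.+1 c)%:R : R.
    set G := \sum_(maxn a.+1 c <= t < minn b F.+1) f t.
    have Lp : 0 < L by rewrite /L ltr0n.
    have GL : L * (L^-1 * G) = G by rewrite mulrA divff ?mul1r // gt_eqF.
    have h2 := ler_wpM2l (ltW Lp) h.
    rewrite GL in h2.
    apply: (le_trans _ h2); rewrite mulrC.
    apply: ler_wpM2r => //.
    apply: (le_trans Hlt); have : 0 <= eta * n%:R by apply: ltW. lra.
  have HL : (minn b F.+1 - maxn a.+1 c)%:R < eta * n%:R :> R.
    move: hLL; case: (posnP (minn b F.+1 - maxn a.+1 c)) => [-> _ //|Lpos].
    rewrite /= -ltNge => hlt.
    have h1 := floor_le (eta * n%:R).
    have h2 : ((minn b F.+1 - maxn a.+1 c)%:Z)%:~R < (Num.floor (eta * n%:R))%:~R :> R.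
      by rewrite ltr_int.
    move: h2; rewrite -pmulrn => h2; lra.
  apply: le_trans Hsum0; apply: mulr_ge0_le0 hae _; lra.
set Cm : R := ('C(n, x.+1 + y.+1 + 1))%:R.
set Cq : R := ('C(n, x + y.+1 + 1))%:R.
set E : R := 3 * eta * n%:R + 2.
have Hlow : (alpha - eta) * (Cm - E * Cq) <=
  \sum_(0 <= i < n.+1 | (c <= i <= F)%N) f i * 'C(i.-1, x.+1)%:R * 'C(n - i, y.+1)%:R.
  rewrite (@exch R n x.+1 y.+1 f (fun t => (c <= t <= F)%N)) //= /Cm /Cq W Q.
  have -> : forall u v : R, (alpha - eta) * (u - E * v) = (alpha - eta) * u - ((alpha - eta) * E) * v.
    by move=> u v; ring.
  rewrite !mulr_sumr -sumrB; apply: ler_sum_nat => a hA.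
  rewrite !mulr_sumr -sumrB; apply: ler_sum_nat => b hb.
  have -> : forall (p l i : R), (alpha - eta) * (p * l) - (alpha - eta) * E * (p * i)
      = p * ((alpha - eta) * (l - E * i)) by move=> *; ring.
  apply: ler_wpM2l; first by apply: mulr_ge0; rewrite ler0n.
  apply: Hpair; [case/andP: hA | case/andP: hb] => //.
apply: le_trans Hlow.
have mn : (x + y.+1 + 1 <= n)%N by clear -hn1 xk yk; lia.
have Hrel : ((x + y.+1 + 1)%:R + 1) * Cm = (n%:R - (x + y.+1 + 1)%:R) * Cq.
  rewrite /Cm /Cq natr1 -natrB // -!natrM.
  have -> : (x.+1 + y.+1 + 1 = (x + y.+1 + 1).+1)%N by clear; lia.
  by rewrite mul_bin_left.
apply: (@final_arith R alpha eps e eta Kn%:R n%:R (x + y.+1 + 1)%:R Cm Cq ha e0 e1 e2 eta0 F1 F2 hn2 npos) => //.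
- by rewrite natr1 ler_nat /Kn; clear -xk yk; lia.
- have : ((2 * (x + y.+1 + 1))%:R <= n%:R :> R) by rewrite ler_nat; clear -hn1 xk yk; lia.
  by rewrite natrM.
Qed.
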